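(* Let $(X,d)$ be a compact metric space and let $f_{1,\infty}=(f_n)_{n=1}^\infty$ be a sequence of continuous maps $f_n:X\to X$ which is either finitely generated or converges uniformly to a map $f:X\to X$. Then for every $k\in\mathbb{N}$, $(X,f_{1,\infty})$ is Kato chaotic if and only if its $k$-th iterate $(X,f_{1,\infty}^{[k]})$ is Kato chaotic.
   Context: For $i,n\in\mathbb{N}$ write $f_i^n=f_{i+n-1}\circ\cdots\circ f_i$, $f_i^0=\mathrm{id}_X$. The $k$-th iterate is $f_{1,\infty}^{[k]}=(f_{k(n-1)+1}^k)_{n=1}^\infty$, whose $n$-fold composition from index $1$ is $f_1^{kn}$. The system $f_{1,\infty}$ is finitely generated if there is a finite set $F$ of continuous self-maps of $X$ with $f_i\in F$ for all $i$. A non-autonomous system $g_{1,\infty}$ (compositions $g_1^n$) is sensitive if there is $\delta>0$ such that for every nonempty open $U\subseteq X$ there exist $x,y\in U$ and $n\in\mathbb{N}$ with $d(g_1^n(x),g_1^n(y))>\delta$; it is accessible if for every $\varepsilon>0$ and all nonempty open $U,V\subseteq X$ there exist $x\in U$, $y\in V$, $n\in\mathbb{N}$ with $d(g_1^n(x),g_1^n(y))<\varepsilon$; it is Kato chaotic if it is sensitive and accessible. *)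

(* Defs.v *)
From Stdlib Require Import Reals Lra Lia.
Open Scope R_scope.

Definition is_metric {X : Type} (d : X -> X -> R) : Prop :=
  (forall x y, 0 <= d x y) /\
  (forall x y, d x y = 0 <-> x = y) /\
  (forall x y, d x y = d y x) /\
  (forall x y z, d x z <= d x y + d y z).

Definition open_in {X : Type} (d : X -> X -> R) (U : X -> Prop) : Prop :=
  forall x, U x -> exists r, 0 < r /\ forall y, d x y < r -> U y.

Definition compact_space {X : Type} (d : X -> X -> R) : Prop :=
  forall (I : Type) (U : I -> X -> Prop),
    (forall i, open_in d (U i)) ->
    (forall x, exists i, U i x) ->
    exists l : list I, forall x, exists i, List.In i l /\ U i x.

Definition continuous_map {X : Type} (d : X -> X -> R) (g : X -> X) : Prop :=
  forall x eps, 0 < eps -> exists delta, 0 < delta /\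
    forall y, d x y < delta -> d (g x) (g y) < eps.

(* f_i^n = f_{i+n-1} o ... o f_i, f_i^0 = id.  Sequences are indexed from 1;
   the value f 0 is never used by the notions below. *)
Fixpoint comp {X : Type} (f : nat -> X -> X) (i n : nat) (x : X) : X :=
  match n with
  | O => x
  | S m => f (i + m)%nat (comp f i m x)
  end.

Definition kth_iterate {X : Type} (f : nat -> X -> X) (k : nat) : nat -> X -> X :=
  fun n => comp f (k * (n - 1) + 1)%nat k.

Definition nonempty_open {X : Type} (d : X -> X -> R) (U : X -> Prop) : Prop :=
  open_in d U /\ exists x, U x.

Definition sensitive {X : Type} (d : X -> X -> R) (g : nat -> X -> X) : Prop :=
  exists delta, 0 < delta /\
    forall U, nonempty_open d U ->
      exists x y n, U x /\ U y /\ (1 <= n)%nat /\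
        d (comp g 1 n x) (comp g 1 n y) > delta.

Definition accessible {X : Type} (d : X -> X -> R) (g : nat -> X -> X) : Prop :=
  forall eps U V, 0 < eps -> nonempty_open d U -> nonempty_open d V ->
    exists x y n, U x /\ V y /\ (1 <= n)%nat /\
      d (comp g 1 n x) (comp g 1 n y) < eps.

Definition kato_chaotic {X : Type} (d : X -> X -> R) (g : nat -> X -> X) : Prop :=
  sensitive d g /\ accessible d g.

Definition finitely_generated {X : Type} (d : X -> X -> R) (f : nat -> X -> X) : Prop :=
  exists F : list (X -> X),
    (forall h, List.In h F -> continuous_map d h) /\
    (forall i, (1 <= i)%nat -> List.In (f i) F).

Definition unif_conv {X : Type} (d : X -> X -> R) (f : nat -> X -> X) (g : X -> X) : Prop :=
  forall eps, 0 < eps -> exists N, forall n x, (N <= n)%nat -> d (f n x) (g x) < eps.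

(* Main.v *)
Require Import Defs.
From Stdlib Require Import Reals Lra Lia List Classical.
Open Scope R_scope.

Lemma comp_add {X : Type} (f : nat -> X -> X) (i a b : nat) (x : X) :
  Defs.comp f i (a + b)%nat x = Defs.comp f (i + a)%nat b (Defs.comp f i a x).
Proof.
  induction b.
  - rewrite Nat.add_0_r; reflexivity.
  - rewrite Nat.add_succ_r; simpl. rewrite IHb. f_equal. lia.
Qed.

Lemma comp_iter {X : Type} (f : nat -> X -> X) (k n : nat) (x : X) :
  Defs.comp (kth_iterate f k) 1 n x = Defs.comp f 1 (k * n)%nat x.
Proof.
  induction n.
  - simpl; rewrite Nat.mul_0_r; reflexivity.
  - simpl (Defs.comp _ 1 (S n) x). rewrite IHn. unfold kth_iterate.
    replace (k * S n)%nat with (k * n + k)%nat by lia.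
    rewrite comp_add. replace (S n - 1)%nat with n by lia.
    f_equal. lia.
Qed.

Lemma unif_cont {X : Type} (d : X -> X -> R) (h : X -> X) :
  is_metric d -> compact_space d -> continuous_map d h ->
  forall eps, 0 < eps -> exists eta, 0 < eta /\
    forall a b, d a b < eta -> d (h a) (h b) < eps.
Proof.
  intros [Hpos [Hzero [Hsym Htri]]] Hcomp Hc eps Heps.
  set (P := fun (p : X * R) => 0 < snd p /\
        forall z, d (fst p) z < snd p -> d (h (fst p)) (h z) < eps / 2).
  set (U := fun (p : X * R) y => P p /\ d (fst p) y < snd p / 2).
  destruct (Hcomp (X * R)%type U) as [l Hl].
  - intros [x dl] y [HP Hy]. exists (dl / 2 - d x y). simpl in Hy. split. lra.
    intros z Hz. split; auto. simpl. pose proof (Htri x y z). lra.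
  - intros y. destruct (Hc y (eps / 2)) as [dl [Hdl Hdl']]; [lra|].
    exists (y, dl). split. split; simpl; auto.
    simpl. assert (d y y = 0) by (apply Hzero; auto). lra.
  - assert (Hm : forall l : list (X * R), exists eta, 0 < eta /\
               forall p, In p l -> P p -> eta <= snd p / 2).
    { induction l0 as [|p l0 IH].
      - exists 1; split; [lra | intros p []].
      - destruct IH as [eta [He Hle]].
        destruct (classic (P p)) as [Hp|Hp].
        + exists (Rmin eta (snd p / 2)). split.
          * apply Rmin_pos; [auto | destruct Hp; lra].
          * intros q [<-|Hq] Hq'. apply Rmin_r.
            eapply Rle_trans; [apply Rmin_l | auto].
        + exists eta. split; auto. intros q [<-|Hq] Hq'; [contradiction | auto]. }
    destruct (Hm l) as [eta [He Hle]]. exists eta; split; auto.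
    intros a b Hab.
    destruct (Hl a) as [[x dl] [Hin [HP Ha]]].
    pose proof (Hle _ Hin HP) as Hle'. destruct HP as [Hdl Hc']. simpl in *.
    assert (Hxb : d x b < dl) by (pose proof (Htri x a b); lra).
    assert (Hxa : d x a < dl) by lra.
    pose proof (Hc' a Hxa) as H1. pose proof (Hc' b Hxb) as H2.
    pose proof (Htri (h a) (h x) (h b)) as H3.
    rewrite (Hsym (h a) (h x)) in H3. lra.
Qed.

Lemma list_equi {X : Type} (d : X -> X -> R) (L : list (X -> X)) :
  is_metric d -> compact_space d -> (forall h, In h L -> continuous_map d h) ->
  forall eps, 0 < eps -> exists eta, 0 < eta /\
    forall h, In h L -> forall a b, d a b < eta -> d (h a) (h b) < eps.
Proof.
  intros Hm Hc HL eps Heps. induction L as [|h0 L IH].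
  - exists 1; split; [lra | intros h []].
  - destruct IH as [e1 [He1 H1]]. { intros h Hh; apply HL; right; auto. }
    destruct (unif_cont d h0 Hm Hc (HL h0 (or_introl eq_refl)) eps Heps) as [e2 [He2 H2]].
    exists (Rmin e1 e2). split. apply Rmin_pos; auto.
    intros h [<-|Hh] a b Hab.
    + apply H2. eapply Rlt_le_trans; [exact Hab | apply Rmin_r].
    + apply H1; auto. eapply Rlt_le_trans; [exact Hab | apply Rmin_l].
Qed.

Lemma equi1 {X : Type} (d : X -> X -> R) (f : nat -> X -> X) :
  is_metric d -> compact_space d ->
  (forall n, (1 <= n)%nat -> continuous_map d (f n)) ->
  (finitely_generated d f \/ exists g : X -> X, unif_conv d f g) ->
  forall eps, 0 < eps -> exists eta, 0 < eta /\
    forall i, (1 <= i)%nat -> forall a b, d a b < eta -> d (f i a) (f i b) < eps.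
Proof.
  intros Hm Hc Hcont [[F [HF Hin]] | [g Hg]] eps Heps.
  - destruct (list_equi d F Hm Hc HF eps Heps) as [eta [He H]].
    exists eta; split; [exact He|]. intros i Hi; apply H. auto.
  - destruct Hm as [Hpos [Hzero [Hsym Htri]]].
    destruct (Hg (eps / 5)) as [N HN]; [lra|].
    assert (HLc : forall h, In h (map f (seq 1 (S N))) -> continuous_map d h).
    { intros h Hh. apply in_map_iff in Hh. destruct Hh as [x [<- Hx]].
      apply in_seq in Hx. apply Hcont. lia. }
    destruct (list_equi d _ (conj Hpos (conj Hzero (conj Hsym Htri))) Hc HLc (eps/5))
      as [eta [He H]]; [lra|].
    exists eta; split; auto. intros i Hi a b Hab.
    destruct (Nat.le_gt_cases i (S N)) as [Hle|Hgt].
    + assert (In (f i) (map f (seq 1 (S N)))).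
      { apply in_map. apply in_seq. lia. }
      pose proof (H _ H0 a b Hab). lra.
    + assert (Hf : In (f (S N)) (map f (seq 1 (S N)))).
      { apply in_map. apply in_seq. lia. }
      pose proof (H _ Hf a b Hab) as A1.
      pose proof (HN i a ltac:(lia)) as A2.
      pose proof (HN i b ltac:(lia)) as A3.
      pose proof (HN (S N) a ltac:(lia)) as A4.
      pose proof (HN (S N) b ltac:(lia)) as A5.
      pose proof (Htri (f i a) (g a) (f i b)) as T1.
      pose proof (Htri (g a) (f (S N) a) (f i b)) as T2.
      pose proof (Htri (f (S N) a) (f (S N) b) (f i b)) as T3.
      pose proof (Htri (f (S N) b) (g b) (f i b)) as T4.
      rewrite (Hsym (g a) (f (S N) a)) in T2.
      rewrite (Hsym (g b) (f i b)) in T4.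
      lra.
Qed.

Lemma equij {X : Type} (d : X -> X -> R) (f : nat -> X -> X) :
  (forall eps, 0 < eps -> exists eta, 0 < eta /\
    forall i, (1 <= i)%nat -> forall a b, d a b < eta -> d (f i a) (f i b) < eps) ->
  forall j eps, 0 < eps -> exists eta, 0 < eta /\
    forall i, (1 <= i)%nat -> forall a b, d a b < eta ->
      d (Defs.comp f i j a) (Defs.comp f i j b) < eps.
Proof.
  intros E1 j. induction j; intros eps Heps.
  - exists eps; split; auto.
  - destruct (E1 eps Heps) as [e1 [He1 H1]].
    destruct (IHj e1 He1) as [e2 [He2 H2]].
    exists e2; split; auto. intros i Hi a b Hab. simpl.
    apply H1; [lia|]. apply H2; auto.
Qed.

Lemma equiK {X : Type} (d : X -> X -> R) (f : nat -> X -> X) :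
  (forall eps, 0 < eps -> exists eta, 0 < eta /\
    forall i, (1 <= i)%nat -> forall a b, d a b < eta -> d (f i a) (f i b) < eps) ->
  forall K eps, 0 < eps -> exists eta, 0 < eta /\
    forall j i, (j <= K)%nat -> (1 <= i)%nat -> forall a b, d a b < eta ->
      d (Defs.comp f i j a) (Defs.comp f i j b) < eps.
Proof.
  intros E1 K. induction K; intros eps Heps.
  - exists eps; split; auto. intros j i Hj Hi a b Hab.
    replace j with 0%nat by lia. exact Hab.
  - destruct (IHK eps Heps) as [e1 [He1 H1]].
    destruct (equij d f E1 (S K) eps Heps) as [e2 [He2 H2]].
    exists (Rmin e1 e2). split. apply Rmin_pos; auto.
    intros j i Hj Hi a b Hab. apply Nat.le_succ_r in Hj. destruct Hj as [Hj|Hj].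
    + apply H1; auto. eapply Rlt_le_trans; [exact Hab | apply Rmin_l].
    + subst j. apply H2; auto. eapply Rlt_le_trans; [exact Hab | apply Rmin_r].
Qed.

Theorem mainTheorem3 (X : Type) (d : X -> X -> R) (f : nat -> X -> X) :
  is_metric d ->
  compact_space d ->
  (forall n, (1 <= n)%nat -> continuous_map d (f n)) ->
  (finitely_generated d f \/ exists g : X -> X, unif_conv d f g) ->
  forall k : nat, (1 <= k)%nat ->
    (kato_chaotic d f <-> kato_chaotic d (kth_iterate f k)).
Proof.
  intros Hm Hc Hcont Hfg k Hk.
  pose proof (equiK d f (equi1 d f Hm Hc Hcont Hfg) k) as EK.
  destruct Hm as [Hpos [Hzero [Hsym Htri]]].
  split.
  - intros [[dl [Hdl Hs]] Ha]. split.
    + destruct (EK dl Hdl) as [eta [He HE]].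
      exists (eta / 2). split; [lra|].
      intros U [HU [x0 Hx0]].
      destruct (HU x0 Hx0) as [r [Hr Hball]].
      set (U' := fun y => d x0 y < Rmin r (eta / 2)).
      assert (HU' : nonempty_open d U').
      { split.
        - intros y Hy. exists (Rmin r (eta/2) - d x0 y). unfold U' in Hy. split. lra.
          intros z Hz. unfold U'. pose proof (Htri x0 y z). lra.
        - exists x0. unfold U'. assert (d x0 x0 = 0) by (apply Hzero; auto).
          pose proof (Rmin_pos r (eta/2) Hr ltac:(lra)). lra. }
      destruct (Hs U' HU') as [x [y [m [Hx [Hy [Hm1 Hdm]]]]]].
      unfold U' in Hx, Hy.
      pose proof (Rmin_l r (eta/2)). pose proof (Rmin_r r (eta/2)).
      assert (Hxy : d x y < eta).
      { pose proof (Htri x x0 y). rewrite (Hsym x x0) in H1. lra. }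
      pose proof (Nat.div_mod_eq m k) as Hdm'.
      pose proof (Nat.mod_upper_bound m k ltac:(lia)) as Hmod.
      set (q := (m / k)%nat) in *. set (s := (m mod k)%nat) in *. clearbody q s.
      destruct (Nat.eq_dec q 0) as [Hq|Hq].
      * exfalso. assert (m = s) by (rewrite Hq in Hdm'; lia). subst m.
        assert (Hs1 : (s <= k)%nat) by lia. pose proof (HE s 1%nat Hs1 (le_n 1) x y Hxy). rewrite H1 in Hdm. lra.
      * exists x, y, q. split; [apply Hball; lra|]. split; [apply Hball; lra|].
        split; [lia|]. rewrite !comp_iter.
        destruct (Rlt_le_dec (d (Defs.comp f 1 (k * q) x) (Defs.comp f 1 (k * q) y)) eta) as [Hl|Hl].
        -- exfalso. rewrite Hdm' in Hdm. rewrite !comp_add in Hdm.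
           assert (Hs1 : (s <= k)%nat) by lia. assert (Hs2 : (1 <= 1 + k * q)%nat) by lia. pose proof (HE s (1 + k * q)%nat Hs1 Hs2 _ _ Hl). lra.
        -- lra.
    + intros eps U V Heps HU HV.
      destruct (EK eps Heps) as [eta [He HE]].
      destruct (Ha eta U V He HU HV) as [x [y [m [Hx [Hy [Hm1 Hd]]]]]].
      pose proof (Nat.div_mod_eq m k) as Hdm'.
      pose proof (Nat.mod_upper_bound m k ltac:(lia)) as Hmod.
      set (q := (m / k)%nat) in *. set (s := (m mod k)%nat) in *. clearbody q s.
      exists x, y, (S q). split; auto. split; auto. split; [lia|].
      rewrite !comp_iter.
      replace (k * S q)%nat with (m + (k - s))%nat by lia.
      rewrite !comp_add. apply HE; [lia | lia | exact Hd].
  - intros [[dl [Hdl Hs]] Ha]. split.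
    + exists dl. split; auto. intros U HU.
      destruct (Hs U HU) as [x [y [n [Hx [Hy [Hn Hd]]]]]].
      exists x, y, (k * n)%nat. rewrite !comp_iter in Hd. repeat split; auto; lia.
    + intros eps U V Heps HU HV.
      destruct (Ha eps U V Heps HU HV) as [x [y [n [Hx [Hy [Hn Hd]]]]]].
      exists x, y, (k * n)%nat. rewrite !comp_iter in Hd. repeat split; auto; lia.
Qed.
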